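(* Let $x_1,\dots,x_N\in\mathbb{R}^d$ with binary labels $y_1,\dots,y_N\in\{0,1\}$, and suppose $N^+:=\sum_i y_i\ge 1$ and $N^-:=\sum_i(1-y_i)\ge 1$. For $\beta\in\mathbb{R}^d$ let $p_\beta(x)=[1+\exp(-\beta^\top x)]^{-1}$ and define the log-loss $$\ell(\beta)=-\sum_{i=1}^N\Big(y_i\ln p_\beta(x_i)+(1-y_i)\ln\big(1-p_\beta(x_i)\big)\Big).$$ Suppose $\beta\in\arg\min_{\beta'\in\mathbb{R}^d}\ell(\beta')$ (a minimizer exists), and let $c=\max_i|\beta^\top x_i|$. Let $\mu^+=\frac{1}{N^+}\sum_{i:y_i=1}x_i$ and $\mu^-=\frac{1}{N^-}\sum_{i:y_i=0}x_i$. Then $$C_1-\big(C_3\,\beta^\top\mu^+-C_4\,\beta^\top\mu^-\big)\;\le\;\ell(\beta)\;\le\; C_2-\big(C_3\,\beta^\top\mu^+-C_4\,\beta^\top\mu^-\big),$$ where $C_1=N\ln 2$, $C_2=N\ln(1+e^{c})-\frac{Nc}{2}$, $C_3=\frac{N^+}{2}$, $C_4=\frac{N^-}{2}$. *)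

(* Defs.v *)
From Stdlib Require Import Reals Lra.
Open Scope R_scope.

Fixpoint fsum (n : nat) (f : nat -> R) : R :=
  match n with
  | O => 0
  | S m => fsum m f + f m
  end.

(* vectors in R^d: functions nat -> R, only coordinates j < d matter *)
Definition dot (d : nat) (u v : nat -> R) : R := fsum d (fun j => u j * v j).

Definition lab (b : bool) : R := if b then 1 else 0.

Definition pb (d : nat) (beta x : nat -> R) : R := / (1 + exp (- dot d beta x)).

Definition logloss (N d : nat) (x : nat -> nat -> R) (y : nat -> bool)
    (beta : nat -> R) : R :=
  - fsum N (fun i => lab (y i) * ln (pb d beta (x i))
                      + (1 - lab (y i)) * ln (1 - pb d beta (x i))).

Definition Nplus (N : nat) (y : nat -> bool) : R := fsum N (fun i => lab (y i)).
Definition Nminus (N : nat) (y : nat -> bool) : R := fsum N (fun i => 1 - lab (y i)).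

(* c = max_i |beta^T x_i|  (0 if N = 0) *)
Definition cmax (N d : nat) (x : nat -> nat -> R) (beta : nat -> R) : R :=
  (fix m (n : nat) : R := match n with
    | O => 0
    | S k => Rmax (m k) (Rabs (dot d beta (x k))) end) N.

Definition bmu_pos (N d : nat) (x : nat -> nat -> R) (y : nat -> bool) (beta : nat -> R) : R :=
  / Nplus N y * fsum N (fun i => lab (y i) * dot d beta (x i)).
Definition bmu_neg (N d : nat) (x : nat -> nat -> R) (y : nat -> bool) (beta : nat -> R) : R :=
  / Nminus N y * fsum N (fun i => (1 - lab (y i)) * dot d beta (x i)).

(* Main.v *)
Require Import Defs.
From Stdlib Require Import Reals Lra Lia Psatz.
Open Scope R_scope.

Lemma my_ln_le a b : 0 < a -> a <= b -> ln a <= ln b.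
Proof. intros Ha Hab. destruct (Req_dec a b) as [->|Hn]; [lra|].
  left; apply ln_increasing; lra. Qed.

Lemma exp_le a b : a <= b -> exp a <= exp b.
Proof. intros H. destruct (Req_dec a b) as [->|Hn]; [lra|].
  left; apply exp_increasing; lra. Qed.

Definition g (t : R) := ln (1 + exp t) - t / 2.

Lemma exp_half t : exp t = exp (t/2) * exp (t/2).
Proof. rewrite <- exp_plus. f_equal. lra. Qed.

Lemma g_ge t : ln 2 <= g t.
Proof. unfold g.
  assert (ln 2 + t/2 = ln (2 * exp (t/2))).
  { rewrite ln_mult, ln_exp. lra. lra. apply exp_pos. }
  assert (ln (2 * exp (t / 2)) <= ln (1 + exp t)).
  { apply my_ln_le. pose proof (exp_pos (t/2)); nra.
    rewrite (exp_half t). pose proof (pow2_ge_0 (exp (t/2) - 1)). simpl in *. lra. }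
  lra. Qed.

Lemma g_even t : g (- t) = g t.
Proof. unfold g.
  assert (1 + exp (-t) = exp (-t) * (1 + exp t)).
  { rewrite Rmult_plus_distr_l, <- exp_plus. replace (-t + t) with 0 by lra.
    rewrite exp_0; lra. }
  rewrite H, ln_mult, ln_exp. lra. apply exp_pos. pose proof (exp_pos t); lra. Qed.

Lemma g_mono a b : 0 <= a -> a <= b -> g a <= g b.
Proof. intros Ha Hab. unfold g.
  set (u := exp (a/2)). set (v := exp (b/2)).
  assert (Hu : 1 <= u). { unfold u; rewrite <- exp_0; apply exp_le; lra. }
  assert (Huv : u <= v). { unfold u, v; apply exp_le; lra. }
  assert (E1 : ln (1 + exp a) + b/2 = ln ((1 + u*u) * v)).
  { rewrite ln_mult. unfold v; rewrite ln_exp. unfold u; rewrite <- exp_half; lra.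
    nra. unfold v; apply exp_pos. }
  assert (E2 : ln (1 + exp b) + a/2 = ln ((1 + v*v) * u)).
  { rewrite ln_mult. unfold u; rewrite ln_exp. unfold v; rewrite <- exp_half; lra.
    nra. unfold u; apply exp_pos. }
  assert (ln ((1 + u*u) * v) <= ln ((1 + v*v) * u)).
  { apply my_ln_le. nra.
    assert (0 <= (v - u) * (u * v - 1)) by (apply Rmult_le_pos; nra). nra. }
  lra. Qed.

Lemma g_abs t c : Rabs t <= c -> g t <= g c.
Proof. intros H. destruct (Rcase_abs t).
  rewrite Rabs_left in H by lra. rewrite <- g_even. apply g_mono; lra.
  rewrite Rabs_right in H by lra. apply g_mono; lra. Qed.

Lemma term_eq b t :
  - (lab b * ln (/ (1 + exp (- t))) + (1 - lab b) * ln (1 - / (1 + exp (- t))))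
  = g t - lab b * t / 2 + (1 - lab b) * t / 2.
Proof.
  assert (Hp : 0 < 1 + exp (-t)) by (pose proof (exp_pos (-t)); lra).
  assert (Hq : 0 < 1 + exp t) by (pose proof (exp_pos t); lra).
  assert (E : 1 - / (1 + exp (-t)) = / (1 + exp t)).
  { rewrite exp_Ropp. pose proof (exp_pos t). field. lra. }
  assert (F : ln (1 + exp (-t)) = ln (1 + exp t) - t).
  { pose proof (g_even t) as G; unfold g in G; lra. }
  rewrite E, !ln_Rinv, F by assumption. unfold g. lra. Qed.

Lemma fsum_ext n f h : (forall i, (i < n)%nat -> f i = h i) -> fsum n f = fsum n h.
Proof. induction n; simpl; intros H; auto. rewrite IHn, H; auto. Qed.

Lemma fsum_le n f h : (forall i, (i < n)%nat -> f i <= h i) -> fsum n f <= fsum n h.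
Proof. induction n; simpl; intros H. lra. pose proof (IHn ltac:(auto)). pose proof (H n ltac:(lia)). lra. Qed.

Lemma fsum_add n f h : fsum n (fun i => f i + h i) = fsum n f + fsum n h.
Proof. induction n; simpl; lra. Qed.

Lemma fsum_scal n a f : fsum n (fun i => a * f i) = a * fsum n f.
Proof. induction n; simpl; lra. Qed.

Lemma fsum_const n a : fsum n (fun _ => a) = INR n * a.
Proof. induction n. simpl; lra. rewrite S_INR. cbn [fsum]. rewrite IHn. lra. Qed.

Lemma cmax_bound N d x beta i : (i < N)%nat -> Rabs (dot d beta (x i)) <= cmax N d x beta.
Proof. induction N; intros H. lia. unfold cmax; fold (cmax N d x beta) .
  destruct (Nat.eq_dec i N) as [->|Hn]. apply Rmax_r.
  eapply Rle_trans. apply IHN; lia. apply Rmax_l. Qed.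

Lemma Kdist : forall n a b : R, n*(a - b/2) = n*a - n*b/2.
Proof. intros; field. Qed.

Theorem theorem2 (N d : nat) (x : nat -> nat -> R) (y : nat -> bool)
  (beta : nat -> R)
  (HNp : 1 <= Nplus N y) (HNn : 1 <= Nminus N y)
  (Hmin : forall beta' : nat -> R, logloss N d x y beta <= logloss N d x y beta') :
  let c := cmax N d x beta in
  let C1 := INR N * ln 2 in
  let C2 := INR N * ln (1 + exp c) - INR N * c / 2 in
  let C3 := Nplus N y / 2 in
  let C4 := Nminus N y / 2 in
  let T := C3 * bmu_pos N d x y beta - C4 * bmu_neg N d x y beta in
  C1 - T <= logloss N d x y beta /\ logloss N d x y beta <= C2 - T.
Proof.
  intros c C1 C2 C3 C4 T.
  set (t := fun i => dot d beta (x i)).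
  set (A := fsum N (fun i => lab (y i) * t i)).
  set (B := fsum N (fun i => (1 - lab (y i)) * t i)).
  assert (HT : T = A / 2 - B / 2).
  { unfold T, C3, C4, bmu_pos, bmu_neg. 
    assert (K : forall P Q a b, P <> 0 -> Q <> 0 -> P/2*(/P*a) - Q/2*(/Q*b) = a/2 - b/2)
      by (intros; field; auto).
    apply K; lra. }
  assert (HL : logloss N d x y beta = fsum N (fun i => g (t i)) - A/2 + B/2).
  { unfold logloss. rewrite <- (Rmult_1_l (fsum _ _)), Ropp_mult_distr_l,
      <- fsum_scal.
    rewrite (fsum_ext N _ (fun i => g (t i) + (-(1/2)) * (lab (y i) * t i) + (1/2) * ((1 - lab (y i)) * t i))).
    rewrite !fsum_add, !fsum_scal. fold A B. lra.
    intros i _. unfold pb. rewrite <- Ropp_mult_distr_l, Rmult_1_l.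
    rewrite term_eq. fold (t i). lra. }
  rewrite HT, HL. split.
  - assert (C1 <= fsum N (fun i => g (t i))).
    { unfold C1. rewrite <- fsum_const. apply fsum_le. intros; apply g_ge. }
    lra.
  - assert (fsum N (fun i => g (t i)) <= INR N * g c).
    { rewrite <- fsum_const. apply fsum_le. intros i Hi. apply g_abs.
      apply cmax_bound; auto. }
    unfold C2. replace (INR N * ln (1 + exp c) - INR N * c / 2) with (INR N * g c) by (unfold g; apply Kdist). lra.
Qed.
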